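(* Let $M\ge 2$ and $0<p_1<p_2<\cdots<p_M$. For $i=1,\dots,M$ define the linear functions $\eta_i(c)=p_i c+\log p_i$ of $c\in\mathbb R$, and for $i\ne j$ let $c_{i,j}=-(\log p_i-\log p_j)/(p_i-p_j)$, so that $\eta_i(c_{i,j})=\eta_j(c_{i,j})$. For $i<j$ define the level of intersection $$\sigma_{i,j}=\big|\{\,l\in\{1,\dots,M\}:\ \eta_l(c_{i,j})<\eta_i(c_{i,j})=\eta_j(c_{i,j})\,\}\big|,$$ and for $s\ge 0$ let $I(s)=\{(i,j):\ 1\le i<j\le M,\ \sigma_{i,j}=s\}$. Then for every $0\le s\le M-2$, $$I(s)=\{(i,\,M-s+i-1):\ i=1,\dots,s+1\}.$$ *)

(* Defs.v *)
From Stdlib Require Import Reals Lra Lia List.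
Open Scope R_scope.

Definition eta (p : nat -> R) (i : nat) (c : R) : R := p i * c + ln (p i).

Definition cij (p : nat -> R) (i j : nat) : R :=
  - (ln (p i) - ln (p j)) / (p i - p j).

Definition sigma_lvl (M : nat) (p : nat -> R) (i j : nat) : nat :=
  length (filter (fun l => if Rlt_dec (eta p l (cij p i j)) (eta p i (cij p i j))
                           then true else false) (seq 1 M)).

(* Main.v *)
Require Import Defs.
From Stdlib Require Import Reals Lra Lia List.
Open Scope R_scope.

Lemma ln_lt_sub1 x : 0 < x -> x <> 1 -> ln x < x - 1.
Proof. intros H1 H2. pose proof (exp_ineq1 (ln x) (ln_neq_0 x H2 H1)).
rewrite exp_ln in H; lra. Qed.

Lemma ln_up u v : 0 < u -> u < v -> u * (ln v - ln u) < v - u.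
Proof. intros Hu Huv.
assert (Hw : 0 < v * / u) by (apply Rmult_lt_0_compat; [lra| apply Rinv_0_lt_compat; lra]).
assert (Hn : v * / u <> 1).
{ intro E. assert (v = u) by (apply (Rmult_eq_reg_r (/ u)); [rewrite Rinv_r; lra | apply Rinv_neq_0_compat; lra]). lra. }
pose proof (ln_lt_sub1 _ Hw Hn) as H.
rewrite ln_mult, ln_Rinv in H by (try apply Rinv_0_lt_compat; lra).
assert (E: u * (v * / u - 1) = v - u) by (field; lra).
rewrite <- E. apply Rmult_lt_compat_l; lra. Qed.

Lemma ln_lo u v : 0 < u -> u < v -> v - u < v * (ln v - ln u).
Proof. intros Hu Huv.
assert (Hw : 0 < u * / v) by (apply Rmult_lt_0_compat; [lra| apply Rinv_0_lt_compat; lra]).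
assert (Hn : u * / v <> 1).
{ intro E. assert (u = v) by (apply (Rmult_eq_reg_r (/ v)); [rewrite Rinv_r; lra | apply Rinv_neq_0_compat; lra]). lra. }
pose proof (ln_lt_sub1 _ Hw Hn) as H.
rewrite ln_mult, ln_Rinv in H by (try apply Rinv_0_lt_compat; lra).
assert (E: v * (1 - u * / v) = v - u) by (field; lra).
rewrite <- E. apply Rmult_lt_compat_l; lra. Qed.

Section KS.
Variables a b : R.
Hypothesis Ha : 0 < a.
Hypothesis Hab : a < b.
Definition c := - (ln a - ln b) / (a - b).
Lemma cE : c * (b - a) = ln a - ln b.
Proof. unfold c. field. lra. Qed.
Lemma k_eq : a * c + ln a = b * c + ln b.
Proof. pose proof cE. nra. Qed.
Lemma k_left x : 0 < x -> x < a -> x * c + ln x < a * c + ln a.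
Proof. intros. pose proof cE. pose proof (ln_lo x a H H0). pose proof (ln_up a b Ha Hab).
 set (A := ln a - ln x) in *. set (B := ln b - ln a) in *.
 assert (a * A * (b - a) > (a - x) * (b - a)) by (apply Rmult_lt_compat_r; lra).
 assert (a * B * (a - x) < (b - a) * (a - x)) by (apply Rmult_lt_compat_r; lra).
 assert (a * (A * (b - a) - B * (a - x)) > 0) by nra.
 assert (A * (b - a) - B * (a - x) > 0).
 { destruct (Rle_lt_dec (A * (b - a) - B * (a - x)) 0); [|lra].
   assert (a * (A * (b - a) - B * (a - x)) <= 0) by nra. lra. }
 assert (HH: (c*(b-a)) * (a - x) = - B * (a-x)) by (rewrite H1; unfold B; ring).
 assert (c * (a - x) * (b - a) + A * (b-a) > 0) by nra.
 assert (c * (a - x) + A > 0).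
 { destruct (Rle_lt_dec (c * (a - x) + A) 0); [|lra].
   assert ((c * (a - x) + A) * (b - a) <= 0) by nra. nra. }
 unfold A in *. lra. Qed.
Lemma posd k t : 0 < k -> k * t > 0 -> t > 0.
Proof. intros. destruct (Rle_lt_dec t 0); [|lra]. nra. Qed.
Lemma k_mid x : a < x -> x < b -> a * c + ln a < x * c + ln x.
Proof. intros. pose proof cE. pose proof (ln_lo a x Ha H). pose proof (ln_up x b ltac:(lra) H0).
 set (A := ln x - ln a) in *. set (B := ln b - ln x) in *.
 assert (x * A * (b - x) > (x - a) * (b - x)) by (apply Rmult_lt_compat_r; lra).
 assert (x * B * (x - a) < (b - x) * (x - a)) by (apply Rmult_lt_compat_r; lra).
 assert (x * (A * (b - x) - B * (x - a)) > 0) by nra.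
 assert (A * (b - x) - B * (x - a) > 0) by (apply (posd x); lra).
 assert (HH: (c*(b-a)) * (x - a) = - (A + B) * (x-a)) by (rewrite H1; unfold A, B; ring).
 assert ((b - a) * (c * (x - a) + A) > 0) by nra.
 assert (c * (x - a) + A > 0) by (apply (posd (b - a)); lra).
 unfold A in *. lra. Qed.
Lemma k_right x : b < x -> x * c + ln x < b * c + ln b.
Proof. intros. pose proof cE. pose proof (ln_lo a b Ha Hab). pose proof (ln_up b x ltac:(lra) H).
 set (A := ln b - ln a) in *. set (B := ln x - ln b) in *.
 assert (b * A * (x - b) > (b - a) * (x - b)) by (apply Rmult_lt_compat_r; lra).
 assert (b * B * (b - a) < (x - b) * (b - a)) by (apply Rmult_lt_compat_r; lra).
 assert (b * (A * (x - b) - B * (b - a)) > 0) by nra.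
 assert (A * (x - b) - B * (b - a) > 0) by (apply (posd b); lra).
 assert (HH: (c*(b-a)) * (b - x) = - A * (b - x)) by (rewrite H0; unfold A; ring).
 assert ((b - a) * (c * (b - x) - B) > 0) by nra.
 assert (c * (b - x) - B > 0) by (apply (posd (b - a)); lra).
 unfold B in *. lra. Qed.
End KS.

Lemma count_aux (i j : nat) (f : nat -> bool) :
  (i < j)%nat -> (forall l, f l = orb (Nat.ltb l i) (Nat.ltb j l)) ->
  forall n, length (filter f (seq 1 n)) = (Nat.min n (i - 1) + (n - j))%nat.
Proof. intros Hij Hf n. induction n as [|n IH]; [simpl; lia|].
 rewrite seq_S, filter_app, length_app, IH. cbn [filter]. rewrite Hf.
 replace (1 + n)%nat with (S n) by lia.
 destruct (Nat.ltb_spec (S n) i); destruct (Nat.ltb_spec j (S n)); cbn [orb length]; lia. Qed.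

Lemma mono (M : nat) (p : nat -> R)
  (Hinc : forall i : nat, (1 <= i)%nat -> (i < M)%nat -> p i < p (S i)) :
  forall a b, (1 <= a)%nat -> (a < b)%nat -> (b <= M)%nat -> p a < p b.
Proof. intros a b Ha Hab. induction b as [|b IH]; [lia|]. intros Hb.
 destruct (Nat.eq_dec a b) as [->|Hne]. apply Hinc; lia.
 apply Rlt_trans with (p b). apply IH; lia. apply Hinc; lia. Qed.

Theorem lemma2 (M : nat) (p : nat -> R)
  (HM : (2 <= M)%nat)
  (Hpos : 0 < p 1%nat)
  (Hinc : forall i : nat, (1 <= i)%nat -> (i < M)%nat -> p i < p (S i))
  (s : nat) (Hs : (s <= M - 2)%nat) :
  forall i j : nat,
    (((1 <= i)%nat /\ (i < j)%nat /\ (j <= M)%nat /\ (sigma_lvl M p i j = s)%nat)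
     <-> ((1 <= i)%nat /\ (i <= s + 1)%nat /\ j = (M - s + i - 1)%nat)).
Proof.
  assert (Hm := mono M p Hinc).
  assert (Hp : forall a, (1 <= a)%nat -> (a <= M)%nat -> 0 < p a).
  { intros a H1 H2. destruct (Nat.eq_dec a 1) as [->|]; auto.
    apply Rlt_trans with (p 1%nat); auto. apply Hm; lia. }
  assert (Hsig : forall i j, (1 <= i)%nat -> (i < j)%nat -> (j <= M)%nat ->
            sigma_lvl M p i j = ((i - 1) + (M - j))%nat).
  { intros i j H1 H2 H3. unfold sigma_lvl.
    assert (Hpi := Hp i H1 ltac:(lia)). assert (Hpij := Hm i j H1 H2 H3).
    rewrite (filter_ext_in _ (fun l => orb (Nat.ltb l i) (Nat.ltb j l))).
    - rewrite (count_aux i j _ H2 (fun l => eq_refl) M). lia.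
    - intros l Hl. apply in_seq in Hl. unfold eta, cij.
      pose proof (k_eq (p i) (p j) Hpij) as E. unfold c in E.
      destruct (Nat.ltb_spec l i); destruct (Nat.ltb_spec j l); simpl.
      + lia.
      + destruct Rlt_dec as [|n]; auto. exfalso; apply n.
        apply (k_left (p i) (p j) Hpi Hpij); [apply Hp; lia | apply Hm; lia].
      + destruct Rlt_dec as [|n]; auto. exfalso; apply n. rewrite E.
        apply (k_right (p i) (p j) Hpi Hpij); apply Hm; lia.
      + destruct Rlt_dec as [r|]; auto. exfalso.
        destruct (Nat.eq_dec l i) as [->|]. lra.
        destruct (Nat.eq_dec l j) as [->|]. lra.
        assert (p i < p l) by (apply Hm; lia). assert (p l < p j) by (apply Hm; lia).
        pose proof (k_mid (p i) (p j) Hpi Hpij (p l) ltac:(lra) ltac:(lra)). unfold c in *. lra. }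
  intros i j; split.
  - intros (H1 & H2 & H3 & H4). rewrite Hsig in H4 by lia. lia.
  - intros (H1 & H2 & H3). assert (Hij : (i < j)%nat) by lia. assert (Hj : (j <= M)%nat) by lia.
    repeat split; try lia. rewrite Hsig by lia. lia.
Qed.
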